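(* Let $H = (V,E)$ be a hypertree with $E = \{e_1, \ldots, e_k\}$ such that $|(e_1 \cup \cdots \cup e_i) \cap e_{i+1}| = 1$ for $i = 1, \ldots, k-1$. Suppose there is a total order $\omega_i$ on each $e_i$, and define a total order $\omega$ on $V$ by $$\omega = (\cdots((\omega_1 \leftarrow \omega_2) \leftarrow \omega_3) \leftarrow \cdots ) \leftarrow \omega_k.$$ Then for any distinct $x,y \in V$, $x <_\omega y$ if and only if $v_r <_{\omega_{j_r}} v_{r+1}$, where $x = v_1, e_{j_1}, v_2, e_{j_2}, \ldots, v_l, e_{j_l}, v_{l+1} = y$ is the unique path from $x$ to $y$ in $H$ and $j_r = \min (j_1, j_2, \ldots, j_l)$.
   Context: A hypergraph is a pair $H=(V,E)$ with $V$ finite and $E$ a family of subsets of $V$ with $|e|>1$. A path is a sequence $v_1, e_1, v_2, \ldots, e_m, v_{m+1}$ with $e_i \in E$, $v_i, v_{i+1} \in e_i$, edges distinct and vertices distinct except that $v_1 = v_{m+1}$ is allowed; if $v_1 = v_{m+1}$ and $m>1$ it is a cycle. A hypertree is a connected hypergraph with no cycles; in a hypertree there is a unique path between any two distinct vertices. Insertion of total orders: given totally ordered sets $(U,\omega_U)$, $(W,\omega_W)$ with $U \cap W = \{x\}$, $\omega_U \leftarrow \omega_W$ is the unique total order on $U \cup W$ agreeing with $\omega_U$ on $U$ and $\omega_W$ on $W$ such that for $u \in U\setminus\{x\}$ and $w \in W$, $u$ precedes $w$ iff $u <_{\omega_U} x$ (i.e. $W$ with its order is inserted in place of $x$ in $U$).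 *)

(* Defs.v *)
From mathcomp Require Import all_boot.
Set Implicit Arguments. Unset Strict Implicit. Unset Printing Implicit Defensive.

(* A hypergraph on the finite vertex type T with k edges e 0, ..., e (k-1)
   (the paper's e_1, ..., e_k, shifted to 0-based indices). *)
Section Hyper.
Variables (T : finType) (k : nat) (e : nat -> {set T}).

Definition is_hypergraph : Prop :=
  (forall i, i < k -> 1 < #|e i|) /\ {in [pred i | i < k] &, injective e}.

(* A path v_1, e_{j_1}, v_2, ..., e_{j_m}, v_{m+1}: the vertex list [vs]
   and the list [js] of edge indices. Edges distinct; vertices distinct except
   that v_1 = v_{m+1} is allowed. *)
Definition is_path (vs : seq T) (js : seq nat) : Prop :=
  [/\ size vs = (size js).+1,
      all (fun j => j < k) js,
      uniq js,
      (forall r x0, r < size js ->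
         nth x0 vs r \in e (nth 0 js r) /\ nth x0 vs r.+1 \in e (nth 0 js r))
    & (forall x0, uniq vs \/ (head x0 vs = last x0 vs /\ uniq (behead vs)))].

Definition is_cycle (vs : seq T) (js : seq nat) : Prop :=
  is_path vs js /\ 1 < size js /\ forall x0, head x0 vs = last x0 vs.

Definition connected_hg : Prop :=
  forall x y : T, x != y ->
    exists vs js, is_path vs js /\ head y vs = x /\ last x vs = y.

Definition is_hypertree : Prop :=
  is_hypergraph /\ connected_hg /\ ~ (exists vs js, is_cycle vs js).

Definition union_upto (i : nat) : {set T} := \bigcup_(j < i) e j.

End Hyper.

Definition strict_total_on (T : finType) (A : {set T}) (r : rel T) : Prop :=
  [/\ {in A, forall a, ~~ r a a},
      {in A & &, forall a b c, r a b -> r b c -> r a c}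
    & {in A &, forall a b, a != b -> r a b || r b a}].

(* Insertion omega_U <- omega_W, where U :&: W = [set x]: the order on U :|: W
   agreeing with rU on U and rW on W, where u in U\{x} precedes w in W iff
   u <_{rU} x (and w precedes u iff x <_{rU} u). *)
Definition insert_order (T : finType) (U W : {set T}) (x : T) (rU rW : rel T)
  : rel T :=
  fun a b =>
    if (a \in U) && (b \in U) then rU a b
    else if (a \in W) && (b \in W) then rW a b
    else if (a \in U) && (b \in W) then rU a x
    else if (a \in W) && (b \in U) then rU x b
    else false.

(* omega_upto n = (...((w_0 <- w_1) <- w_2) ...) <- w_{n-1}, an order on
   e_0 ∪ ... ∪ e_{n-1}; the inserted point at each step is the unique element
   of (e_0 ∪ ... ∪ e_{i-1}) ∩ e_i. *)
Fixpoint omega_upto (T : finType) (e : nat -> {set T}) (w : nat -> rel T)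
    (n : nat) : rel T :=
  match n with
  | 0 => fun _ _ => false
  | i.+1 =>
      match [pick v in union_upto e i :&: e i] with
      | Some x => insert_order (union_upto e i) (e i) x (omega_upto e w i) (w i)
      | None => w i
      end
  end.

(* Main.v *)
Require Import Defs.
From mathcomp Require Import all_boot.
From mathcomp Require Import zify.

Lemma inU (T : finType) (e : nat -> {set T}) n i a :
  i < n -> a \in e i -> a \in union_upto e n.
Proof. by move=> Hi Ha; apply/bigcupP; exists (Ordinal Hi). Qed.
Arguments inU {T e n i a}.

Lemma U0 (T : finType) (e : nat -> {set T}) : union_upto e 0 = set0.
Proof. by rewrite /union_upto big_ord0. Qed.

Lemma single (T : finType) (e : nat -> {set T}) n (a b : T) :
  (0 < n -> #|union_upto e n :&: e n| = 1) ->
  a \in union_upto e n -> a \in e n -> b \in union_upto e n -> b \in e n ->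
  a = b.
Proof.
case: n => [|n] H; first by rewrite U0 inE.
move=> a1 a2 b1 b2; have [z Hz] := cards1P (introT eqP (H isT)).
have : a \in [set z] by rewrite -Hz inE a1 a2.
have : b \in [set z] by rewrite -Hz inE b1 b2.
by rewrite !inE => /eqP -> /eqP ->.
Qed.
Arguments single {T e n a b}.

Lemma core (T : finType) (e : nat -> {set T}) (w : nat -> rel T) n :
  (forall i, 0 < i < n -> #|union_upto e i :&: e i| = 1) ->
  forall l (v : nat -> T) (j : nat -> nat),
  (forall a b, a <= l.+1 -> b <= l.+1 -> v a = v b -> a = b) ->
  (forall a b, a < l.+1 -> b < l.+1 -> j a = j b -> a = b) ->
  (forall t, t < l.+1 -> [/\ j t < n, v t \in e (j t) & v t.+1 \in e (j t)]) ->
  forall r, r < l.+1 -> (forall s, s < l.+1 -> j r <= j s) ->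
  (omega_upto e w n (v 0) (v l.+1) <-> w (j r) (v r) (v r.+1)).
Proof.
elim: n => [|n IH] Hc l v j vinj jinj Hp r rl rmin.
  by case: (Hp 0 isT); rewrite ltn0.
have Hc' : forall i, 0 < i < n -> #|union_upto e i :&: e i| = 1.
  by move=> i /andP[i0 iN]; apply: Hc; rewrite i0 /= ltnS ltnW.
have HcN : 0 < n -> #|union_upto e n :&: e n| = 1.
  by move=> n0; apply: Hc; rewrite n0 ltnSn.
have nonone : 0 < n -> forall (P : pred T), P =1 xpred0 ->
    P =1 (fun x => x \in union_upto e n :&: e n) -> False.
  move=> n0 P HP HP'; have [z Hz] := cards1P (introT eqP (HcN n0)).
  by have := HP z; rewrite HP' /= Hz set11.
simpl.
case: (boolP [exists t : 'I_l.+1, j t == n]) => [/existsP [[s sl] /= /eqP js] | Hno].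
- have jlt : forall t, t < l.+1 -> t != s -> j t < n.
    move=> t tl ts; case: (Hp t tl) => jt _ _.
    have : j t <> n by move=> E; move/eqP: ts; apply; apply: jinj => //; rewrite E js.
    lia.
  case: l vinj jinj Hp rl rmin sl jlt => [|l] vinj jinj Hp rl rmin sl jlt.
  + have s0 : s = 0 by lia.
    have r0 : r = 0 by lia.
    subst s r; case: (Hp 0 isT) => _ a b; rewrite js in a b.
    case: pickP => [c Hc0|_]; last by rewrite js.
    rewrite /insert_order.
    have -> : (v 0 \in union_upto e n) && (v 1 \in union_upto e n) = false.
      apply/negbTE/negP => /andP [p q].
      by move: (single HcN p a q b) => /(vinj 0 1 isT isT).
    by rewrite a b js.
  + have [t0 t0l t0s] : exists2 t0, t0 < l.+2 & t0 != s.
      case: (eqVneq s 0) => [->|s0]; [exists 1 | exists 0]; lia.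
    have n0 : 0 < n by have := jlt t0 t0l t0s; lia.
    have rs : r != s.
      apply/eqP => rs; subst r; have := jlt t0 t0l t0s; have := rmin t0 t0l; lia.
    case: pickP => [c Hc0 | Hnone]; last first.
      by exfalso; apply: (nonone n0 _ Hnone).
    move: Hc0; rewrite inE => /andP[cU cE].
    rewrite /insert_order.
    have [s0|sn0] := eqVneq s 0.
    * subst s.
      case: (Hp 0 isT) => _ v0E v1E; rewrite js in v0E v1E.
      have v1U : v 1 \in union_upto e n.
        by case: (Hp 1 isT) => _ H _; apply: inU H; apply: jlt.
      have v1c : v 1 = c by apply: (single HcN v1U v1E cU cE).
      have v0U : v 0 \notin union_upto e n.
        apply/negP => H; have := single HcN H v0E cU cE; rewrite -v1c.
        by move/(vinj 0 1 isT isT).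
      have vlU : v l.+2 \in union_upto e n.
        by case: (Hp l.+1 (ltnSn _)) => _ _ H; apply: inU H; apply: jlt.
      have vlE : v l.+2 \notin e n.
        apply/negP => H; have := single HcN vlU H cU cE; rewrite -v1c.
        by move/(vinj l.+2 1 (leqnn _) isT).
      rewrite (negbTE v0U) (negbTE vlE) v0E vlU /= -v1c.
      case: r rl rmin rs => [|r] // rl rmin _.
      apply: (IH Hc' l (fun t => v t.+1) (fun t => j t.+1)).
      -- by move=> a b al bl /vinj H; apply/eqP; rewrite -eqSS; apply/eqP; apply: H.
      -- by move=> a b al bl /jinj H; apply/eqP; rewrite -eqSS; apply/eqP; apply: H.
      -- move=> t tl; case: (Hp t.+1 tl) => _ p q; split => //; exact: jlt.
      -- by [].
      -- by move=> s2 sl2; apply: rmin.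
    * have [sl1|sl1] := eqVneq s l.+1.
      -- subst s.
         case: (Hp l.+1 (ltnSn _)) => _ vE vlE; rewrite js in vE vlE.
         have vU : v l.+1 \in union_upto e n.
           by case: (Hp l (ltnW (ltnSn _))) => _ _ H; apply: inU H; apply: jlt => //; lia.
         have vc : v l.+1 = c by apply: (single HcN vU vE cU cE).
         have v0U : v 0 \in union_upto e n.
           by case: (Hp 0 isT) => _ H _; apply: inU H; apply: jlt.
         have vlU : v l.+2 \notin union_upto e n.
           apply/negP => H; have := single HcN H vlE cU cE; rewrite -vc.
           by move/(vinj l.+2 l.+1 (leqnn _) (leqnSn _)); lia.
         have v0E : v 0 \notin e n.
           apply/negP => H; have := single HcN v0U H cU cE; rewrite -vc.
           by move/(vinj 0 l.+1 isT (leqnSn _)).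
         rewrite (negbTE vlU) (negbTE v0E) v0U vlE /= -vc.
         apply: (IH Hc' l v j).
         ++ by move=> a b al bl; apply: vinj; lia.
         ++ by move=> a b al bl; apply: jinj; lia.
         ++ move=> t tl; case: (Hp t (ltnW tl)) => _ p q; split => //.
            by apply: jlt; lia.
         ++ by lia.
         ++ by move=> s2 sl2; apply: rmin; lia.
      -- exfalso.
         case: (Hp s sl) => _ _ b; rewrite js in b.
         case: (Hp s.-1 ltac:(lia)) => _ _; rewrite prednK ?lt0n // => a.
         have aU : v s \in union_upto e n by apply: inU a; apply: jlt; lia.
         case: (Hp s ltac:(lia)) => _ a' _; rewrite js in a'.
         case: (Hp s.+1 ltac:(lia)) => _ b' _.
         have bU : v s.+1 \in union_upto e n by apply: inU b'; apply: jlt; lia.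
         have := single HcN aU a' bU b.
         move/(vinj s s.+1 ltac:(lia) ltac:(lia)); lia.
- have jlt : forall t, t < l.+1 -> j t < n.
    move=> t tl; case: (Hp t tl) => jt _ _.
    have : j t <> n.
      move=> E; move/negP: Hno; apply; apply/existsP; exists (Ordinal tl).
      by rewrite /= E.
    lia.
  have n0 : 0 < n by have := jlt 0 isT; lia.
  case: pickP => [c Hc0 | Hnone]; last first.
    by exfalso; apply: (nonone n0 _ Hnone).
  rewrite /insert_order.
  have v0U : v 0 \in union_upto e n.
    by case: (Hp 0 isT) => _ H _; apply: inU H; apply: jlt.
  have vlU : v l.+1 \in union_upto e n.
    by case: (Hp l (ltnSn _)) => _ _ H; apply: inU H; apply: jlt.
  rewrite v0U vlU /=.
  apply: (IH Hc' l v j) => //.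
  by move=> t tl; case: (Hp t tl) => _ p q; split => //; apply: jlt.
Qed.
Arguments core {T e w n}.

Theorem lemma4p2 (T : finType) (k : nat) (e : nat -> {set T})
    (w : nat -> rel T) :
  is_hypertree k e ->
  (forall i, 0 < i < k -> #|union_upto e i :&: e i| = 1) ->
  (forall i, i < k -> strict_total_on (e i) (w i)) ->
  forall (x y : T), x != y ->
  forall (vs : seq T) (js : seq nat),
    is_path k e vs js -> head y vs = x -> last x vs = y ->
  forall r, r < size js ->
    (forall s, s < size js -> nth 0 js r <= nth 0 js s) ->
    (omega_upto e w k x y <-> w (nth 0 js r) (nth x vs r) (nth x vs r.+1)).
Proof.
move=> _ Hc _ x y xy vs js [Hsz Hall Hu Hmem Huniq] hx ly r rl rmin.
have Hl : size js = (size js).-1.+1 by rewrite prednK //; lia.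
set l := (size js).-1 in Hl.
case: vs Hsz hx ly Hmem Huniq => [|x' vs'] // Hsz /= hx ly Hmem Huniq.
subst x'.
have Hvs : size vs' = l.+1 by move: Hsz; rewrite Hl /=; case.
have Hun : uniq (x :: vs').
  case: (Huniq x) => // [[/= E _]]; move: xy; rewrite E ly eqxx //.
have ey : nth x (x :: vs') l.+1 = y.
  by rewrite -ly -Hvs (nth_last x (x :: vs')).
rewrite -{1}ey.
move/(all_nthP 0): Hall => Hall.
rewrite Hl in rl rmin Hall Hmem.
apply: (core Hc l (nth x (x :: vs')) (nth 0 js)) => //.
- move=> a b al bl /eqP; rewrite nth_uniq //=; first by move/eqP.
  + by rewrite Hvs; lia.
  + by rewrite Hvs; lia.
- move=> a b al bl /eqP; rewrite nth_uniq ?Hl //; by move/eqP.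
- move=> t tl; case: (Hmem t x tl) => p q; split => //; exact: Hall.
Qed.
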